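(* Let $G$ be a graph with $V(G)=[n]$, without isolated vertices, and let $I=[n]\setminus[n-i]$ be an independent set of $G$ (for some $i\ge 0$); write $\overline{S}=[n]\setminus S$. Order the facets of $\mathcal{NC}(G)$ by $\prec$ as defined in the context. If $\sigma,\sigma'\in\mathcal{NC}(G)$ satisfy $\overline{\sigma}\cap\overline{I}=\overline{\sigma'}\cap\overline{I}$ and the induced subgraph $G[\overline{\sigma}\cap\overline{I}]$ contains an edge, then $\mathrm{mes}_{\prec}(\sigma)=\mathrm{mes}_{\prec}(\sigma')$.
   Context: $\mathcal{NC}(G)$ is the simplicial complex on $V(G)$ whose faces are the sets $W\subseteq V(G)$ such that $V(G)\setminus W$ contains both endpoints of some edge. Its facets are exactly the sets $[n]\setminus\{a,b\}$ for edges $ab\in E(G)$. For edges $a_1b_1,a_2b_2$ with $a_j<b_j$, write $a_1b_1<_L a_2b_2$ if $b_1<b_2$, or $b_1=b_2$ and $a_1<a_2$. For distinct facets $\sigma,\tau$, set $\sigma\prec\tau$ iff $\overline{\sigma}<_L\overline{\tau}$; this gives a linear order $\sigma_1,\dots,\sigma_m$ of the facets. Minimal exclusion sequence: for a face $\sigma$, let $i$ be the smallest index with $\sigma\subseteq\sigma_i$. If $i=1$, $\mathrm{mes}_\prec(\sigma)$ is the empty sequence; otherwise $\mathrm{mes}_\prec(\sigma)=(v_1,\dots,v_{i-1})$ where $v_1=\min(\sigma\setminus\sigma_1)$ and for $2\le k\le i-1$, $v_k=\min(\{v_1,\dots,v_{k-1}\}\cap(\sigma\setminus\sigma_k))$ if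 this intersection is nonempty, and $v_k=\min(\sigma\setminus\sigma_k)$ otherwise (minima taken in the natural order of $[n]$). *)

(* Defs.v *)
(* Vertices [n] = {1..n} are modelled by 'I_n = {0..n-1}
   (vertex v+1 of the paper is the ordinal v); the natural order is preserved. *)
From mathcomp Require Import all_boot.
Set Implicit Arguments. Unset Strict Implicit. Unset Printing Implicit Defensive.

Section NC.
Variable n : nat.
Variable e : rel 'I_n.  (* simple graph: symmetric irreflexive relation *)

(* W is a face of NC(G): the complement of W contains both ends of an edge *)
Definition is_face (W : {set 'I_n}) : Prop :=
  exists a b, [/\ a \notin W, b \notin W & e a b].

(* the order <_L on edges ab (a < b), written non-strictly *)
Definition leL (p q : 'I_n * 'I_n) : bool :=
  (p.2 < q.2) || ((p.2 == q.2) && (p.1 <= q.1)).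

Definition edges_L : seq ('I_n * 'I_n) :=
  sort leL [seq p : 'I_n * 'I_n <- enum [set: ('I_n * 'I_n)%type] | (p.1 < p.2) && e p.1 p.2].

Definition facet_of (p : 'I_n * 'I_n) : {set 'I_n} := [set: 'I_n] :\ p.1 :\ p.2.

(* facets sigma_1, sigma_2, ... in the order prec *)
Definition facets : seq {set 'I_n} := map facet_of edges_L.

Definition vmin (A : {set 'I_n}) : option 'I_n :=
  [pick x in A | [forall y in A, x <= y]].

Definition mes_step (s : {set 'I_n}) (vs : seq 'I_n) (tau : {set 'I_n})
  : seq 'I_n :=
  let D := s :\: tau in
  let C := [set x in D | x \in vs] in
  let m := if C != set0 then vmin C else vmin D in
  match m with Some x => rcons vs x | None => vs end.

(* mes(sigma): with i the (1-based) index of the first facet containing sigma,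
   the sequence (v_1, ..., v_{i-1}) computed from sigma_1, ..., sigma_{i-1}. *)
Definition mes (s : {set 'I_n}) : seq 'I_n :=
  let i0 := find (fun t : {set 'I_n} => s \subset t) facets in   (* = i - 1 *)
  foldl (mes_step s) [::] (take i0 facets).

End NC.

(* Main.v *)
Require Import Defs.
From mathcomp Require Import all_boot.

Section Aux.
Variable n : nat.
Variable e : rel 'I_n.

Lemma leL_trans : transitive (@leL n).
Proof.
move=> q p r; rewrite /leL => /orP[h1|/andP[/eqP h1 h2]] /orP[h3|/andP[/eqP h3 h4]].
- by rewrite (ltn_trans h1 h3).
- by rewrite -h3 h1.
- by rewrite h1 h3.
- by rewrite h1 h3 eqxx (leq_trans h2 h4) orbT.
Qed.

Lemma leL_refl : reflexive (@leL n).
Proof. by move=> p; rewrite /leL eqxx leqnn orbT. Qed.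

Lemma leL_total : total (@leL n).
Proof.
move=> p q; rewrite /leL.
case: (ltngtP p.2 q.2) => h; rewrite ?h ?orbT //= ?eqxx /=; try exact: leq_total.
by rewrite (val_inj h) eqxx /= leq_total.
Qed.

Lemma mes_step_eq (s s' : {set 'I_n}) vs tau : s :\: tau = s' :\: tau ->
  mes_step s vs tau = mes_step s' vs tau.
Proof. by rewrite /mes_step => ->. Qed.

Lemma foldl_eq (s s' : {set 'I_n}) (l : seq ('I_n * 'I_n)) vs :
  (forall p, p \in l -> s :\: facet_of p = s' :\: facet_of p) ->
  foldl (mes_step s) vs (map (@facet_of n) l) =
  foldl (mes_step s') vs (map (@facet_of n) l).
Proof.
elim: l vs => //= p l IH vs H.
rewrite (@mes_step_eq s s' vs _ (H p (mem_head _ _))); apply: IH => x hx.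
by apply: H; rewrite inE hx orbT.
Qed.

Lemma edges_lt p : p \in edges_L e -> p.1 < p.2.
Proof. by rewrite /edges_L mem_sort mem_filter => /andP[/andP[]]. Qed.

End Aux.

Theorem claim2p2 (n : nat) (e : rel 'I_n)
  (e_sym : symmetric e) (e_irr : irreflexive e)
  (no_isolated : forall v : 'I_n, exists u, e v u)
  (i : nat)
  (I_indep : forall u v : 'I_n, n - i <= u -> n - i <= v -> ~~ e u v)
  (s s' : {set 'I_n})
  (hs : is_face e s) (hs' : is_face e s')
  (heq : ~: s :&: ~: [set v : 'I_n | n - i <= v]
         = ~: s' :&: ~: [set v : 'I_n | n - i <= v])
  (hedge : exists u v : 'I_n,
     [/\ u \in ~: s :&: ~: [set w : 'I_n | n - i <= w],
         v \in ~: s :&: ~: [set w : 'I_n | n - i <= w] & e u v]) :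
  mes e s = mes e s'.
Proof.
have hA : forall x : 'I_n, x < n - i -> (x \in s) = (x \in s').
  move=> x hx; have := congr1 (fun A : {set 'I_n} => x \in A) heq => /=.
  by rewrite !inE leqNgt hx /= !andbT => h; rewrite -[x \in s]negbK h negbK.
have hB : forall p : 'I_n * 'I_n, p.1 < n - i -> p.2 < n - i ->
    s :\: facet_of p = s' :\: facet_of p.
  move=> p h1 h2; apply/setP => x; rewrite !inE.
  case: (x =P p.2) => [->|_] /=; first by rewrite hA.
  case: (x =P p.1) => [->|_] /=; first by rewrite hA.
  by [].
have hP : forall p : 'I_n * 'I_n, p.1 < n - i -> p.2 < n - i ->
    (s \subset facet_of p) = (s' \subset facet_of p).
  by move=> p h1 h2; rewrite -!setD_eq0 hB.
case: hedge => u [v [hu hv huv]].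
move: hu hv; rewrite !inE -!ltnNge => /andP[us ui] /andP[vs vi].
have uv : u != v by apply/eqP => h; move: huv; rewrite h e_irr.
pose q : 'I_n * 'I_n := if u < v then (u, v) else (v, u).
have q1 : q.1 < n - i by rewrite /q; case: ifP.
have q2 : q.2 < n - i by rewrite /q; case: ifP.
have qin : q \in edges_L e.
  rewrite /edges_L mem_sort mem_filter mem_enum inE andbT /q.
  case: (ltngtP u v) => h /=; first by rewrite h huv.
    by rewrite h e_sym huv.
  by move: uv; rewrite -(inj_eq val_inj) /= h eqxx.
have Pq : s \subset facet_of q.
  apply/subsetP => x xs; rewrite !inE andbT.
  by apply/andP; split; apply/eqP => h; rewrite /q in h; case: ifP h => _ /= h;
    rewrite h in xs; rewrite ?xs in us vs.
set l := edges_L e.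
have srt : sorted (@leL n) l by apply: sort_sorted; exact: leL_total.
set m := index q l.
have good : forall x, x \in take m.+1 l -> x.1 < n - i /\ x.2 < n - i.
  move=> x hx.
  have hm : m < size l by rewrite index_mem.
  have hsz : size (take m.+1 l) = m.+1 by rewrite size_takel.
  have := nth_index x hx; set j := index x _ => hxj.
  have hj : j < m.+1 by rewrite -hsz index_mem.
  rewrite nth_take // in hxj.
  have hle : leL (nth x l j) (nth x l m).
    apply: (sorted_leq_nth (@leL_trans n) (@leL_refl n)) => //.
      by rewrite inE (leq_trans hj).
  rewrite hxj /m nth_index // in hle.
  have x2 : x.2 < n - i.
    move: hle; rewrite /leL => /orP[h|/andP[/eqP -> _]] //.
    exact: ltn_trans q2.
  split => //; apply: ltn_trans x2; apply: (@edges_lt n e).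
  exact: mem_take hx.
have fnd : find (fun p => s \subset facet_of p) l =
           find (fun p => s' \subset facet_of p) l.
  rewrite -(cat_take_drop m.+1 l) !find_cat.
  have qt : q \in take m.+1 l.
    by rewrite -{1}(nth_index q qin) -/m -(@nth_take m.+1) // mem_nth // size_takel // index_mem.
  have e1 : {in take m.+1 l, (fun p => s \subset facet_of p) =1
                             (fun p => s' \subset facet_of p)}.
    by move=> x /good[h1 h2]; apply: hP.
  rewrite (eq_in_find e1) (eq_in_has e1).
  have -> // : has (fun p => s' \subset facet_of p) (take m.+1 l).
  by apply/hasP; exists q => //; rewrite -hP.
rewrite /mes /facets !find_map.
have -> : find (preim (@facet_of n) (fun t => s \subset t)) (edges_L e) =
          find (fun p => s \subset facet_of p) l by [].
have -> : find (preim (@facet_of n) (fun t => s' \subset t)) (edges_L e) =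
          find (fun p => s' \subset facet_of p) l by [].
rewrite -fnd -!map_take; apply: foldl_eq => p hp.
have hk : find (fun p => s \subset facet_of p) l <= m.
  rewrite leqNgt; apply/negP => h.
  by have := before_find q h; rewrite /m nth_index // Pq.
have [] := good p; last by move=> h1 h2; apply: hB.
move: hp; rewrite -(take_takel _ (leqW hk)) => hp; exact: mem_take hp.
Qed.
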